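(* Let $ABC$ be a triangle with incenter $I$ and Bevan point $B_e$. Let $A_0, B_0, C_0$ be the points where the $A$-, $B$-, $C$-excircles touch $BC, CA, AB$ respectively, and let $O_0$ be the circumcenter of $A_0B_0C_0$. Let $A', B', C'$ be the feet of the perpendiculars from $B_e$ to $AI, BI, CI$, and let $H'$ be the orthocenter of $A'B'C'$. Then $B_e$, $H'$, $O_0$ are collinear.
   Context: The Bevan point $B_e$ of $ABC$ is the circumcenter of the excentral triangle (the triangle formed by the three excenters of $ABC$). *)

(* Defs.v *)
From mathcomp Require Import all_boot all_order all_algebra.
Set Implicit Arguments. Unset Strict Implicit. Unset Printing Implicit Defensive.
Import Order.TTheory GRing.Theory Num.Theory.
Local Open Scope ring_scope.

Section Plane.
Variable R : rcfType.
Definition point := (R * R)%type.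

Definition padd (P Q : point) : point := (P.1 + Q.1, P.2 + Q.2).
Definition psub (P Q : point) : point := (P.1 - Q.1, P.2 - Q.2).
Definition pscale (k : R) (P : point) : point := (k * P.1, k * P.2).
Definition dot (P Q : point) : R := P.1 * Q.1 + P.2 * Q.2.
Definition dist (P Q : point) : R := Num.sqrt (dot (psub P Q) (psub P Q)).

Definition collinear (P Q S : point) : Prop :=
  (Q.1 - P.1) * (S.2 - P.2) - (Q.2 - P.2) * (S.1 - P.1) = 0.

Definition bary (wa wb wc : R) (A B C : point) : point :=
  pscale (wa + wb + wc)^-1
    (padd (pscale wa A) (padd (pscale wb B) (pscale wc C))).

Definition incenter (A B C : point) : point :=
  bary (dist B C) (dist C A) (dist A B) A B C.
Definition excenterA (A B C : point) : point :=
  bary (- dist B C) (dist C A) (dist A B) A B C.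
Definition excenterB (A B C : point) : point :=
  bary (dist B C) (- dist C A) (dist A B) A B C.
Definition excenterC (A B C : point) : point :=
  bary (dist B C) (dist C A) (- dist A B) A B C.

Definition is_circumcenter (O P Q S : point) : Prop :=
  dist O P = dist O Q /\ dist O Q = dist O S.

Definition is_bevan_point (Be A B C : point) : Prop :=
  is_circumcenter Be (excenterA A B C) (excenterB A B C) (excenterC A B C).

Definition is_foot (F P X Y : point) : Prop :=
  collinear X Y F /\ dot (psub P F) (psub Y X) = 0.

Definition is_orthocenter (H P Q S : point) : Prop :=
  dot (psub H P) (psub Q S) = 0 /\ dot (psub H Q) (psub S P) = 0 /\
  dot (psub H S) (psub P Q) = 0.
End Plane.

(* Main.v *)
Require Import Defs.
From mathcomp Require Import all_boot all_order all_algebra.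
From mathcomp Require Import ring lra.
Import Order.TTheory GRing.Theory Num.Theory.
Set Implicit Arguments. Unset Strict Implicit.
Local Open Scope ring_scope.



Lemma pt_eq (R : rcfType) (X Y : point R) : X.1 = Y.1 -> X.2 = Y.2 -> X = Y.
Proof. by case: X Y => [x1 x2] [y1 y2] /= -> ->. Qed.

Lemma lin2 (R : rcfType) (a1 b1 a2 b2 x y : R) :
  a1*x + b1*y = 0 -> a2*x + b2*y = 0 -> a1*b2 - a2*b1 != 0 -> x = 0 /\ y = 0.
Proof.
move=> e1 e2 d.
have hx : x * (a1*b2 - a2*b1) = 0.
  have -> : x * (a1*b2 - a2*b1) = b2*(a1*x+b1*y) - b1*(a2*x+b2*y) by ring.
  by rewrite e1 e2; ring.
have hy : y * (a1*b2 - a2*b1) = 0.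
  have -> : y * (a1*b2 - a2*b1) = a1*(a2*x+b2*y) - a2*(a1*x+b1*y) by ring.
  by rewrite e1 e2; ring.
move/eqP: hx; move/eqP: hy; rewrite !mulf_eq0 (negbTE d) !orbF.
by move=> /eqP -> /eqP ->.
Qed.

Lemma dot_ge0 (R : rcfType) (X : point R) : 0 <= dot X X.
Proof. rewrite /dot; nra. Qed.

Lemma dist_sq (R : rcfType) (O P Q : point R) :
  dist O P = dist O Q -> dot (psub O P) (psub O P) = dot (psub O Q) (psub O Q).
Proof. by move=> /eqP; rewrite /dist eqr_sqrt ?dot_ge0 // => /eqP. Qed.

Lemma dist_val (R : rcfType) (X Y : point R) (l : R) :
  0 <= l -> dot (psub X Y) (psub X Y) = l ^+ 2 -> dist X Y = l.
Proof. by move=> hl h; rewrite /dist h sqrtr_sqr ger0_norm. Qed.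

Lemma two_neq0 (R : rcfType) : (2 : R) != 0.
Proof. by rewrite pnatr_eq0. Qed.

Lemma circ_eq (R : rcfType) (O P Q S X : point R) :
  is_circumcenter O P Q S ->
  dot (psub X P) (psub X P) = dot (psub X Q) (psub X Q) ->
  dot (psub X Q) (psub X Q) = dot (psub X S) (psub X S) ->
  (Q.1-P.1)*(S.2-Q.2) - (S.1-Q.1)*(Q.2-P.2) != 0 -> O = X.
Proof.
move=> [/dist_sq h1 /dist_sq h2] e1 e2 d.
have k1 : (dot (psub O P) (psub O P) - dot (psub O Q) (psub O Q))
   - (dot (psub X P) (psub X P) - dot (psub X Q) (psub X Q)) = 0.
  by rewrite h1 e1 !subrr ?subr0.
have k2 : (dot (psub O Q) (psub O Q) - dot (psub O S) (psub O S))
   - (dot (psub X Q) (psub X Q) - dot (psub X S) (psub X S)) = 0.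
  by rewrite h2 e2 !subrr ?subr0.
suff [a b] : O.1-X.1 = 0 /\ O.2-X.2 = 0.
  by apply: pt_eq; apply/eqP; rewrite -subr_eq0; apply/eqP; [rewrite a|rewrite b].
apply: (@lin2 R (Q.1-P.1) (Q.2-P.2) (S.1-Q.1) (S.2-Q.2) _ _ _ _ d).
- apply: (@mulIf _ 2); first exact: two_neq0.
  by rewrite mul0r -k1 /dot /psub /=; ring.
- apply: (@mulIf _ 2); first exact: two_neq0.
  by rewrite mul0r -k2 /dot /psub /=; ring.
Qed.

Lemma foot_eq (R : rcfType) (F P X Y Z : point R) :
  is_foot F P X Y -> is_foot Z P X Y ->
  (Y.1-X.1)^+2 + (Y.2-X.2)^+2 != 0 -> F = Z.
Proof.
move=> [c1 d1] [c2 d2] n.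
suff [a b] : F.1-Z.1 = 0 /\ F.2-Z.2 = 0.
  by apply: pt_eq; apply/eqP; rewrite -subr_eq0; apply/eqP; [rewrite a|rewrite b].
apply: (@lin2 R (-(Y.2-X.2)) (Y.1-X.1) (Y.1-X.1) (Y.2-X.2)).
- move: c1 c2; rewrite /collinear => c1 c2.
  have -> : -(Y.2-X.2)*(F.1-Z.1) + (Y.1-X.1)*(F.2-Z.2) =
     ((Y.1 - X.1) * (F.2 - X.2) - (Y.2 - X.2) * (F.1 - X.1))
   - ((Y.1 - X.1) * (Z.2 - X.2) - (Y.2 - X.2) * (Z.1 - X.1)) by ring.
  by rewrite c1 c2 subrr.
- move: d1 d2; rewrite /dot /psub /= => d1 d2.
  have -> : (Y.1-X.1)*(F.1-Z.1) + (Y.2-X.2)*(F.2-Z.2) =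
    ((P.1 - Z.1) * (Y.1 - X.1) + (P.2 - Z.2) * (Y.2 - X.2))
   - ((P.1 - F.1) * (Y.1 - X.1) + (P.2 - F.2) * (Y.2 - X.2)) by ring.
  by rewrite d1 d2 subrr.
- have -> : - (Y.2 - X.2) * (Y.2 - X.2) - (Y.1 - X.1) * (Y.1 - X.1) = -((Y.1-X.1)^+2 + (Y.2-X.2)^+2) by ring.
  by rewrite oppr_eq0.
Qed.

Lemma orth_eq (R : rcfType) (H P Q S Z : point R) :
  is_orthocenter H P Q S ->
  dot (psub Z P) (psub Q S) = 0 -> dot (psub Z Q) (psub S P) = 0 ->
  (Q.1-S.1)*(S.2-P.2) - (S.1-P.1)*(Q.2-S.2) != 0 -> H = Z.
Proof.
move=> [h1 [h2 _]] e1 e2 d.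
suff [a b] : H.1-Z.1 = 0 /\ H.2-Z.2 = 0.
  by apply: pt_eq; apply/eqP; rewrite -subr_eq0; apply/eqP; [rewrite a|rewrite b].
apply: (@lin2 R (Q.1-S.1) (Q.2-S.2) (S.1-P.1) (S.2-P.2) _ _ _ _ d).
- move: h1 e1; rewrite /dot /psub /= => h1 e1.
  have -> : (Q.1-S.1)*(H.1-Z.1) + (Q.2-S.2)*(H.2-Z.2) =
    ((H.1 - P.1) * (Q.1 - S.1) + (H.2 - P.2) * (Q.2 - S.2))
   - ((Z.1 - P.1) * (Q.1 - S.1) + (Z.2 - P.2) * (Q.2 - S.2)) by ring.
  by rewrite h1 e1 subrr.
- move: h2 e2; rewrite /dot /psub /= => h2 e2.
  have -> : (S.1-P.1)*(H.1-Z.1) + (S.2-P.2)*(H.2-Z.2) =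
    ((H.1 - Q.1) * (S.1 - P.1) + (H.2 - Q.2) * (S.2 - P.2))
   - ((Z.1 - Q.1) * (S.1 - P.1) + (Z.2 - Q.2) * (S.2 - P.2)) by ring.
  by rewrite h2 e2 subrr.
Qed.

Lemma sq2_neq0 (R : rcfType) (x y : R) : y != 0 -> x^+2 + y^+2 != 0.
Proof. by move=> h; rewrite paddr_eq0 ?sqr_ge0 // !sqrf_eq0 (negbTE h) andbF. Qed.

Lemma neq0_by (R : rcfType) (y x : R) : x = y -> y != 0 -> x != 0.
Proof. by move=> ->. Qed.

Ltac nz := repeat match goal with
 | |- is_true (_ && _) => apply/andP; split
 | |- is_true true => exact: isT
 | |- is_true (_ != 0) => first [assumption | by rewrite pnatr_eq0 | rewrite mulf_neq0 | rewrite expf_neq0 | rewrite oppr_eq0 | rewrite invr_eq0]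
 end.



Definition Ac (R:rcfType) (u v : R) : point R := ((u-v)/(u*v-1), (u*v+1)/(u*v-1)).
Definition Bc (R:rcfType) (u v : R) : point R := (-u, -1).
Definition Cc (R:rcfType) (u v : R) : point R := (v, -1).

Lemma canon_dists (R : rcfType) (u v : R) : 0 < u -> 0 < v -> 1 < u*v ->
  [/\ dist (Bc u v) (Cc u v) = u+v,
      dist (Cc u v) (Ac u v) = u*(v^+2+1)/(u*v-1) &
      dist (Ac u v) (Bc u v) = v*(u^+2+1)/(u*v-1)].
Proof.
move=> hu hv huv.
have k0 : u*v-1 != 0 by rewrite subr_eq0 gt_eqF.
have k1 : 0 < u*v-1 by rewrite subr_gt0.
split.
- apply: dist_val; first lra. rewrite /dot /psub /=; ring.
- apply: dist_val. apply: divr_ge0; last lra. apply: mulr_ge0; nra.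
  rewrite /dot /psub /=. field. done.
- apply: dist_val. apply: divr_ge0; last lra. apply: mulr_ge0; nra.
  rewrite /dot /psub /=. field. done.
Qed.

Lemma canon_centers (R : rcfType) (u v : R) : 0 < u -> 0 < v -> 1 < u*v ->
  [/\ incenter (Ac u v) (Bc u v) (Cc u v) = (0,0),
      excenterA (Ac u v) (Bc u v) (Cc u v) = (v-u, -(1+u*v)),
      excenterB (Ac u v) (Bc u v) (Cc u v) = (u*(1+v^+2)/(u*v-1), (1+v^+2)/(u*v-1)) &
      excenterC (Ac u v) (Bc u v) (Cc u v) = (-(v*(1+u^+2))/(u*v-1), (1+u^+2)/(u*v-1))].
Proof.
move=> hu hv huv.
have k0 : u*v-1 != 0 by rewrite subr_eq0 gt_eqF.
have k1 : 0 < u*v-1 by rewrite subr_gt0.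
have uv0 : u+v != 0 by rewrite gt_eqF //; lra.
have u0 : u != 0 by rewrite gt_eqF.
have v0 : v != 0 by rewrite gt_eqF.
have [dBC dCA dAB] := canon_dists hu hv huv.
rewrite /incenter /excenterA /excenterB /excenterC dBC dCA dAB.
have e1 : u + v + u * (v ^+ 2 + 1) / (u * v - 1) + v * (u ^+ 2 + 1) / (u * v - 1)
   = 2*(u*v*(u+v))/(u*v-1) by field.
have e2 : - (u + v) + u * (v ^+ 2 + 1) / (u * v - 1) + v * (u ^+ 2 + 1) / (u * v - 1)
   = 2*(u+v)/(u*v-1) by field.
have e3 : (u + v) - u * (v ^+ 2 + 1) / (u * v - 1) + v * (u ^+ 2 + 1) / (u * v - 1)
   = 2*u by field.
have e4 : (u + v) + u * (v ^+ 2 + 1) / (u * v - 1) - v * (u ^+ 2 + 1) / (u * v - 1)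
   = 2*v by field.
rewrite /bary /pscale /padd /= e1 e2 e3 e4.
split; apply: pt_eq => /=; field; rewrite ?k0 ?uv0 ?u0 ?v0 ?two_neq0 //.
Qed.



Lemma canon (R : rcfType) (u v : R) (Be A0 B0 C0 O0 A' B' C' H' : point R) :
  0 < u -> 0 < v -> 1 < u*v ->
  is_bevan_point Be (Ac u v) (Bc u v) (Cc u v) ->
  is_foot A0 (excenterA (Ac u v) (Bc u v) (Cc u v)) (Bc u v) (Cc u v) ->
  is_foot B0 (excenterB (Ac u v) (Bc u v) (Cc u v)) (Cc u v) (Ac u v) ->
  is_foot C0 (excenterC (Ac u v) (Bc u v) (Cc u v)) (Ac u v) (Bc u v) ->
  is_circumcenter O0 A0 B0 C0 ->
  is_foot A' Be (Ac u v) (incenter (Ac u v) (Bc u v) (Cc u v)) ->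
  is_foot B' Be (Bc u v) (incenter (Ac u v) (Bc u v) (Cc u v)) ->
  is_foot C' Be (Cc u v) (incenter (Ac u v) (Bc u v) (Cc u v)) ->
  is_orthocenter H' A' B' C' ->
  collinear Be H' O0.
Proof.
move=> hu hv huv.
have k0 : u*v-1 != 0 by rewrite subr_eq0 gt_eqF.
have k1 : 0 < u*v-1 by rewrite subr_gt0.
have uv0 : u+v != 0 by rewrite gt_eqF //; lra.
have u0 : u != 0 by rewrite gt_eqF.
have v0 : v != 0 by rewrite gt_eqF.
have u2 : 1 + u^+2 != 0 by rewrite gt_eqF //; nra.
have v2 : 1 + v^+2 != 0 by rewrite gt_eqF //; nra.
have [hI hIa hIb hIc] := canon_centers hu hv huv.
rewrite /is_bevan_point hI hIa hIb hIc.
move=> hBe hA0 hB0 hC0 hO0 hA' hB' hC' hH'.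
have eBe : Be = (v-u, (3+u^+2+v^+2-u^+2*v^+2)/(2*(u*v-1))).
  apply: (circ_eq hBe); rewrite /dot /psub /=.
  - by field; rewrite ?k0 ?two_neq0.
  - by field; rewrite ?k0 ?two_neq0.
  apply: (neq0_by (y := u*v*(u+v)*(1+u^+2)*(1+v^+2)/(u*v-1)^+2)).
    by field.
  by rewrite !mulf_neq0 ?invr_eq0 ?expf_neq0.
rewrite eBe in hA' hB' hC'.
have eA0 : A0 = (v-u, -1).
  apply: (foot_eq hA0); last by rewrite /= gt_eqF //; nra.
  by split; rewrite /collinear /dot /psub /=; ring.
have eB0 : B0 = ((u - 2*v^+3 + u*v^+4)/((u*v-1)*(1+v^+2)), (1+u*v+3*v^+2-u*v^+3)/((u*v-1)*(1+v^+2))).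
  apply: (foot_eq hB0); last first.
    apply: sq2_neq0 => /=. apply: (neq0_by (y := 2*u*v/(u*v-1))); first by field.
    by rewrite !mulf_neq0 ?invr_eq0 ?two_neq0.
  by split; rewrite /collinear /dot /psub /=; field; rewrite ?k0 ?v2.
have eC0 : C0 = ((2*u^+3 - v - u^+4*v)/((u*v-1)*(1+u^+2)), (1+3*u^+2+u*v-u^+3*v)/((u*v-1)*(1+u^+2))).
  apply: (foot_eq hC0); last first.
    apply: sq2_neq0 => /=. apply: (neq0_by (y := -(2*u*v/(u*v-1)))); first by field.
    by rewrite oppr_eq0 !mulf_neq0 ?invr_eq0 ?two_neq0.
  by split; rewrite /collinear /dot /psub /=; field; rewrite ?k0 ?u2.
rewrite eA0 eB0 eC0 in hO0.
have eO0 : O0 = ((-3*u + u^+3 + 3*v + 7*u^+2*v - 7*u*v^+2 - 3*u^+3*v^+2 - v^+3 + 3*u^+2*v^+3)/(4*(u*v-1)^+2),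
   (-9 - 2*u^+2 - u^+4 + 10*u*v + 2*u^+3*v - 2*v^+2 + 6*u^+2*v^+2 + 2*u*v^+3 - 6*u^+3*v^+3 - v^+4 + u^+4*v^+4)/(8*(u*v-1)^+2)).
  apply: (circ_eq hO0); rewrite /dot /psub /=.
  - by field; nz.
  - by field; nz.
  apply: (neq0_by (y := 4*u*v*(u+v)/((1+u^+2)*(1+v^+2)))).
  - by field; nz.
  by nz.
have eA' : A' = ((3*u - 3*v - u^+2*v + u*v^+2)/(2*(u*v-1)), (3 + 2*u*v - u^+2*v^+2)/(2*(u*v-1))).
  apply: (foot_eq hA'); last first.
    apply: sq2_neq0 => /=. apply: (neq0_by (y := -((u*v+1)/(u*v-1)))); first by ring.
    rewrite oppr_eq0; nz. by rewrite gt_eqF //; nra.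
  by split; rewrite /collinear /dot /psub /=; field; nz.
have eB' : B' = ((3*u - 2*u^+2*v + u*v^+2)/(2*(u*v-1)), (3 - 2*u*v + v^+2)/(2*(u*v-1))).
  apply: (foot_eq hB'); last first.
    apply: sq2_neq0 => /=. apply: (neq0_by (y := 1)); first by ring.
    by rewrite oner_neq0.
  by split; rewrite /collinear /dot /psub /=; field; nz.
have eC' : C' = ((-3*v - u^+2*v + 2*u*v^+2)/(2*(u*v-1)), (3 + u^+2 - 2*u*v)/(2*(u*v-1))).
  apply: (foot_eq hC'); last first.
    apply: sq2_neq0 => /=. apply: (neq0_by (y := 1)); first by ring.
    by rewrite oner_neq0.
  by split; rewrite /collinear /dot /psub /=; field; nz.
rewrite eA' eB' eC' in hH'.
rewrite eBe eO0.
have [hdeg|hndeg] := boolP ((u*v-3)^+2 + (u-v)^+2 == 0).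
  move: hdeg; rewrite paddr_eq0 ?sqr_ge0 // !sqrf_eq0 !subr_eq0 => /andP[/eqP h3 /eqP huv'].
  subst v.
  have h3' : u^+2 = 3 by rewrite -h3; ring.
  rewrite /collinear /=.
  have -> : (3 + u ^+ 2 + u ^+ 2 - u ^+ 2 * u ^+ 2) = - ((u^+2 - 3) * (u^+2 + 1)) by ring.
  have -> : (-9 - 2 * u ^+ 2 - u ^+ 4 + 10 * u * u + 2 * u ^+ 3 * u - 2 * u ^+ 2 +
     6 * u ^+ 2 * u ^+ 2 + 2 * u * u ^+ 3 - 6 * u ^+ 3 * u ^+ 3 - u ^+ 4 + u ^+ 4 * u ^+ 4)
     = (u^+2 - 3) * (u^+6 - 3*u^+4 - u^+2 + 3) by ring.
  rewrite h3'; ring.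
have eH' : H' = ((2*u - 2*v - u^+2*v + u*v^+2)/(u*v-1), (3 - u*v)/(u*v-1)).
  apply: (orth_eq hH'); rewrite /dot /psub /=.
  - by field; nz.
  - by field; nz.
  apply: (neq0_by (y := -(u*v*(u+v)*((u*v-3)^+2+(u-v)^+2))/(4*(u*v-1)^+2))).
    by field; nz.
  by nz.
rewrite eH' /collinear /=.
by field; nz.
Qed.



Definition sgb (R : rcfType) (b : bool) : R := if b then 1 else -1.

Definition sim (R : rcfType) (T : point R) (p q : R) (b : bool) (X : point R) : point R :=
  (T.1 + p*X.1 - sgb R b* q*X.2, T.2 + q*X.1 + sgb R b* p*X.2).

Definition siminv (R : rcfType) (T : point R) (p q : R) (b : bool) (X : point R) : point R :=
  ((p*(X.1-T.1) + q*(X.2-T.2))/(p^+2+q^+2), sgb R b*(-q*(X.1-T.1) + p*(X.2-T.2))/(p^+2+q^+2)).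

Lemma sim_inv (R : rcfType) T (p q : R) b X : p^+2+q^+2 != 0 -> sim T p q b (siminv T p q b X) = X.
Proof. by move=> hk; case: b; apply: pt_eq; rewrite /sim /siminv /sgb /=; field. Qed.

Lemma dot_sim (R : rcfType) T (p q : R) b X Y Z W :
  dot (psub (sim T p q b X) (sim T p q b Y)) (psub (sim T p q b Z) (sim T p q b W))
  = (p^+2+q^+2) * dot (psub X Y) (psub Z W).
Proof. by case: b; rewrite /dot /psub /sim /sgb /=; ring. Qed.

Lemma dist_sim (R : rcfType) T (p q : R) b X Y :
  dist (sim T p q b X) (sim T p q b Y) = Num.sqrt (p^+2+q^+2) * dist X Y.
Proof. by rewrite /dist dot_sim sqrtrM // addr_ge0 ?sqr_ge0. Qed.

Lemma sgb_neq0 (R : rcfType) b : sgb R b != 0.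
Proof. by case: b; rewrite /sgb ?oppr_eq0 oner_neq0. Qed.

Lemma coll_sim_e (R : rcfType) T (p q : R) b X Y Z :
  let S := sim T p q b in
  ((S Y).1 - (S X).1) * ((S Z).2 - (S X).2) - ((S Y).2 - (S X).2) * ((S Z).1 - (S X).1)
  = sgb R b * (p^+2+q^+2) * ((Y.1 - X.1) * (Z.2 - X.2) - (Y.2 - X.2) * (Z.1 - X.1)).
Proof. by case: b; rewrite /sim /sgb /=; ring. Qed.

Lemma coll_sim (R : rcfType) T (p q : R) b X Y Z : p^+2+q^+2 != 0 ->
  collinear (sim T p q b X) (sim T p q b Y) (sim T p q b Z) -> collinear X Y Z.
Proof.
move=> hk; rewrite /collinear coll_sim_e => /eqP.
by rewrite !mulf_eq0 (negbTE hk) (negbTE (sgb_neq0 _ _)) /= => /eqP.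
Qed.

Lemma coll_sim' (R : rcfType) T (p q : R) b X Y Z :
  collinear X Y Z -> collinear (sim T p q b X) (sim T p q b Y) (sim T p q b Z).
Proof. by rewrite /collinear coll_sim_e => ->; rewrite mulr0. Qed.

Lemma bary_sim (R : rcfType) T (p q : R) b wa wb wc A B C : wa + wb + wc != 0 ->
  sim T p q b (bary wa wb wc A B C) = bary wa wb wc (sim T p q b A) (sim T p q b B) (sim T p q b C).
Proof. by move=> h; case: b; apply: pt_eq; rewrite /sim /bary /pscale /padd /sgb /=; field. Qed.

Lemma bary_scale (R : rcfType) (k wa wb wc : R) A B C : k != 0 -> wa + wb + wc != 0 ->
  bary (k*wa) (k*wb) (k*wc) A B C = bary wa wb wc A B C.
Proof. move=> hk h; have h2 : k*wa+k*wb+k*wc != 0 by rewrite -!mulrDr mulf_neq0.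
by apply: pt_eq; rewrite /bary /pscale /padd /=; field; nz. Qed.

Lemma sqrtk_neq0 (R : rcfType) (p q : R) : p^+2+q^+2 != 0 -> Num.sqrt (p^+2+q^+2) != 0.
Proof.
move=> hk; rewrite gt_eqF // sqrtr_gt0 lt_neqAle eq_sym hk /=.
by rewrite addr_ge0 ?sqr_ge0.
Qed.

Lemma centers_sim (R : rcfType) T (p q : R) b A B C : p^+2+q^+2 != 0 ->
  let S := sim T p q b in
  dist B C + dist C A + dist A B != 0 ->
  - dist B C + dist C A + dist A B != 0 ->
  dist B C - dist C A + dist A B != 0 ->
  dist B C + dist C A - dist A B != 0 ->
  [/\ incenter (S A) (S B) (S C) = S (incenter A B C),
      excenterA (S A) (S B) (S C) = S (excenterA A B C),
      excenterB (S A) (S B) (S C) = S (excenterB A B C) &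
      excenterC (S A) (S B) (S C) = S (excenterC A B C)].
Proof.
move=> hk S h0 h1 h2 h3.
have hs := sqrtk_neq0 hk.
rewrite /incenter /excenterA /excenterB /excenterC /S !dist_sim -!mulrN.
rewrite !bary_scale // -?mulNr ?opprK //.
by rewrite !bary_sim // -?[_ - dist C A]addrA -?[_ - dist A B]addrA.
Qed.

Lemma foot_sim (R : rcfType) T (p q : R) b F P X Y : p^+2+q^+2 != 0 ->
  is_foot (sim T p q b F) (sim T p q b P) (sim T p q b X) (sim T p q b Y) -> is_foot F P X Y.
Proof.
move=> hk [h1 h2]; split; first exact: (coll_sim hk h1).
by move: h2; rewrite dot_sim => /eqP; rewrite mulf_eq0 (negbTE hk) => /eqP.
Qed.

Lemma circ_sim (R : rcfType) T (p q : R) b O P Q X : p^+2+q^+2 != 0 ->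
  is_circumcenter (sim T p q b O) (sim T p q b P) (sim T p q b Q) (sim T p q b X) -> is_circumcenter O P Q X.
Proof.
move=> hk; rewrite /is_circumcenter !dist_sim => [[h1 h2]].
by split; apply: (mulfI (sqrtk_neq0 hk)).
Qed.

Lemma orth_sim (R : rcfType) T (p q : R) b H P Q X : p^+2+q^+2 != 0 ->
  is_orthocenter (sim T p q b H) (sim T p q b P) (sim T p q b Q) (sim T p q b X) -> is_orthocenter H P Q X.
Proof.
move=> hk; rewrite /is_orthocenter !dot_sim => [[h1 [h2 h3]]].
by do ![split]; apply: (mulfI hk); rewrite mulr0.
Qed.

Lemma transfer (R : rcfType) T (p q : R) b (u v : R) (Be A0 B0 C0 O0 A' B' C' H' : point R) :
  p^+2+q^+2 != 0 -> 0 < u -> 0 < v -> 1 < u*v ->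
  let S := sim T p q b in
  let A := S (Ac u v) in let B := S (Bc u v) in let C := S (Cc u v) in
  is_bevan_point (S Be) A B C ->
  is_foot (S A0) (excenterA A B C) B C ->
  is_foot (S B0) (excenterB A B C) C A ->
  is_foot (S C0) (excenterC A B C) A B ->
  is_circumcenter (S O0) (S A0) (S B0) (S C0) ->
  is_foot (S A') (S Be) A (incenter A B C) ->
  is_foot (S B') (S Be) B (incenter A B C) ->
  is_foot (S C') (S Be) C (incenter A B C) ->
  is_orthocenter (S H') (S A') (S B') (S C') ->
  collinear (S Be) (S H') (S O0).
Proof.
move=> hk hu hv huv S A B C.
have k1 : 0 < u*v-1 by rewrite subr_gt0.
have [dBC dCA dAB] := canon_dists hu hv huv.
have pb : 0 < u*(v^+2+1)/(u*v-1) by apply: divr_gt0 => //; apply: mulr_gt0 => //; nra.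
have pc : 0 < v*(u^+2+1)/(u*v-1) by apply: divr_gt0 => //; apply: mulr_gt0 => //; nra.
have s0 : dist (Bc u v) (Cc u v) + dist (Cc u v) (Ac u v) + dist (Ac u v) (Bc u v) != 0.
  by rewrite dBC dCA dAB gt_eqF //; lra.
have s1 : - dist (Bc u v) (Cc u v) + dist (Cc u v) (Ac u v) + dist (Ac u v) (Bc u v) != 0.
  rewrite dBC dCA dAB; apply: (neq0_by (y := 2*(u+v)/(u*v-1))); first by field; nz; rewrite gt_eqF.
  by rewrite gt_eqF //; apply: divr_gt0 => //; lra.
have s2 : dist (Bc u v) (Cc u v) - dist (Cc u v) (Ac u v) + dist (Ac u v) (Bc u v) != 0.
  rewrite dBC dCA dAB; apply: (neq0_by (y := 2*u)); first by field; nz; rewrite gt_eqF.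
  by rewrite gt_eqF //; lra.
have s3 : dist (Bc u v) (Cc u v) + dist (Cc u v) (Ac u v) - dist (Ac u v) (Bc u v) != 0.
  rewrite dBC dCA dAB; apply: (neq0_by (y := 2*v)); first by field; nz; rewrite gt_eqF.
  by rewrite gt_eqF //; lra.
have [eI eIa eIb eIc] := centers_sim T b hk s0 s1 s2 s3.
rewrite /A /B /C /S /is_bevan_point eI eIa eIb eIc.
move=> hBe hA0 hB0 hC0 hO0 hA' hB' hC' hH'.
apply: coll_sim'.
exact: (canon hu hv huv (circ_sim hk hBe) (foot_sim hk hA0) (foot_sim hk hB0) (foot_sim hk hC0)
  (circ_sim hk hO0) (foot_sim hk hA') (foot_sim hk hB') (foot_sim hk hC') (orth_sim hk hH')).
Qed.



Lemma key_alg (R : rcfType) (x y z r : R) : 0 < x -> 0 < y -> 0 < z -> 0 < r ->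
  r^+2 = x*y*z/(x+y+z) ->
  [/\ r*((z/r)*((y/r)^+2+1)/((y/r)*(z/r)-1)) = x+y,
      r*((y/r)*((z/r)^+2+1)/((y/r)*(z/r)-1)) = x+z,
      r*((y/r)+(z/r)) = y+z,
      r^+2*(((y/r)+(z/r))*(2*((y/r)*(z/r))/((y/r)*(z/r)-1))) = 2*r*(x+y+z) &
      1 < (y/r)*(z/r)].
Proof.
move=> hx hy hz hr hr2.
have r0 : r != 0 by rewrite gt_eqF.
have s0 : x+y+z != 0 by rewrite gt_eqF //; lra.
have x0 : x != 0 by rewrite gt_eqF.
have y0 : y != 0 by rewrite gt_eqF.
have z0 : z != 0 by rewrite gt_eqF.
have yz0 : y+z != 0 by rewrite gt_eqF //; lra.
have e1 : y*z - r^+2 = y*z*(y+z)/(x+y+z) by rewrite hr2; field; nz.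
have p1 : 0 < y*z - r^+2 by rewrite e1; apply: divr_gt0; [apply: mulr_gt0; [apply: mulr_gt0|]|]; lra.
have e2 : (y/r)*(z/r) - 1 = (y*z - r^+2)/r^+2 by field; nz.
have n2 : (y/r)*(z/r) - 1 != 0 by rewrite e2; nz; rewrite gt_eqF.
have n3 : y*z - r^+2 != 0 by rewrite gt_eqF.
split.
- transitivity (z*(y^+2+r^+2)/(y*z-r^+2)); first by field; nz.
  by rewrite e1 hr2; field; nz.
- transitivity (y*(z^+2+r^+2)/(y*z-r^+2)); first by field; nz.
  by rewrite e1 hr2; field; nz.
- by field; nz.
- transitivity (2*r*(y+z)*(y*z)/(y*z-r^+2)); first by field; nz.
  by rewrite e1; field; nz.
- have : 0 < (y/r)*(z/r) - 1 by rewrite e2; apply: divr_gt0 => //; apply: exprn_gt0.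
  lra.
Qed.

Lemma same_point (R : rcfType) (P A B C : point R) :
  dot (psub P B) (psub P B) = dot (psub A B) (psub A B) ->
  dot (psub P C) (psub P C) = dot (psub A C) (psub A C) ->
  (C.1-B.1)*(P.2-B.2) - (C.2-B.2)*(P.1-B.1) = (C.1-B.1)*(A.2-B.2) - (C.2-B.2)*(A.1-B.1) ->
  (C.1-B.1)^+2 + (C.2-B.2)^+2 != 0 -> P = A.
Proof.
move=> h1 h2 h3 n.
suff [a b] : P.1-A.1 = 0 /\ P.2-A.2 = 0.
  by apply: pt_eq; apply/eqP; rewrite -subr_eq0; apply/eqP; [rewrite a|rewrite b].
apply: (@lin2 R (C.1-B.1) (C.2-B.2) (-(C.2-B.2)) (C.1-B.1)).
- apply: (@mulIf _ 2); first exact: two_neq0.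
  have k : (dot (psub P B) (psub P B) - dot (psub A B) (psub A B))
     - (dot (psub P C) (psub P C) - dot (psub A C) (psub A C)) = 0.
    by rewrite h1 h2 !subrr ?subr0.
  by rewrite mul0r -k /dot /psub /=; ring.
- have k : ((C.1-B.1)*(P.2-B.2) - (C.2-B.2)*(P.1-B.1)) - ((C.1-B.1)*(A.2-B.2) - (C.2-B.2)*(A.1-B.1)) = 0.
    by rewrite h3 subrr.
  by rewrite -k; ring.
- have -> : (C.1 - B.1) * (C.1 - B.1) - - (C.2 - B.2) * (C.2 - B.2) = (C.1-B.1)^+2 + (C.2-B.2)^+2 by ring.
  exact: n.
Qed.

Lemma tri_pos (R : rcfType) (a b c : R) : 0 <= a -> 0 <= b -> 0 <= c ->
  0 < (a+b+c)*(-a+b+c)*(a-b+c)*(a+b-c) -> 0 < -a+b+c.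
Proof.
move=> ha hb hc h; rewrite ltNge; apply/negP => h1.
have : (a+b+c)*(-a+b+c)*(a-b+c)*(a+b-c) <= 0.
  have -> : (a+b+c)*(-a+b+c)*(a-b+c)*(a+b-c) = ((a+b+c)*(a-b+c)*(a+b-c)) * (-a+b+c) by ring.
  apply: mulr_ge0_le0 => //. apply: mulr_ge0; [apply: mulr_ge0|]; lra.
by rewrite leNgt h.
Qed.

Lemma coll_sim_e2 (R : rcfType) T (p q : R) b X Y Z :
  ((sim T p q b Y).1 - (sim T p q b X).1) * ((sim T p q b Z).2 - (sim T p q b X).2)
  - ((sim T p q b Y).2 - (sim T p q b X).2) * ((sim T p q b Z).1 - (sim T p q b X).1)
  = sgb R b * (p^+2+q^+2) * ((Y.1 - X.1) * (Z.2 - X.2) - (Y.2 - X.2) * (Z.1 - X.1)).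
Proof. by case: b; rewrite /sim /sgb /=; ring. Qed.



Lemma realize (R : rcfType) (A B C : point R) : ~ collinear A B C ->
  exists T p q b u v, [/\ p^+2+q^+2 != 0, 0 < u, 0 < v, 1 < u*v &
    [/\ sim T p q b (Ac u v) = A, sim T p q b (Bc u v) = B & sim T p q b (Cc u v) = C]].
Proof.
move=> hnc.
have ha2 : dist B C ^+2 = (C.1-B.1)^+2 + (C.2-B.2)^+2.
  by rewrite /dist sqr_sqrtr ?dot_ge0 // /dot /psub /=; ring.
have hb2 : dist C A ^+2 = (A.1-C.1)^+2 + (A.2-C.2)^+2.
  by rewrite /dist sqr_sqrtr ?dot_ge0 // /dot /psub /=; ring.
have hc2 : dist A B ^+2 = (A.1-B.1)^+2 + (A.2-B.2)^+2.
  by rewrite /dist sqr_sqrtr ?dot_ge0 // /dot /psub /=; ring.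
have ha0 : 0 <= dist B C by apply: sqrtr_ge0.
have hb0 : 0 <= dist C A by apply: sqrtr_ge0.
have hc0 : 0 <= dist A B by apply: sqrtr_ge0.
move: ha2 hb2 hc2 ha0 hb0 hc0.
move: (dist B C) (dist C A) (dist A B) => a bb c ha2 hb2 hc2 ha0 hb0 hc0.
move: hnc; rewrite /collinear => hnc.
have hcr : (C.1-B.1)*(A.2-B.2) - (C.2-B.2)*(A.1-B.1) != 0.
  apply/eqP => h; apply: hnc; rewrite -h; ring.
have [cr ecr] : exists cr, cr = (C.1-B.1)*(A.2-B.2) - (C.2-B.2)*(A.1-B.1) by eexists.
rewrite -ecr in hcr.
have heron : 4 * cr^+2 = (a+bb+c)*(-a+bb+c)*(a-bb+c)*(a+bb-c).
  transitivity (2*a^+2*bb^+2 + 2*bb^+2*c^+2 + 2*c^+2*a^+2 - (a^+2)^+2 - (bb^+2)^+2 - (c^+2)^+2); last by ring.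
  rewrite ha2 hb2 hc2 ecr; ring.
have hP : 0 < (a+bb+c)*(-a+bb+c)*(a-bb+c)*(a+bb-c).
  have hcr2 : 0 < cr^+2 by rewrite exprn_even_gt0 // hcr orbT.
  by rewrite -heron mulr_gt0.
have hx := tri_pos ha0 hb0 hc0 hP.
have hy : 0 < -bb+a+c.
  apply: (tri_pos hb0 ha0 hc0).
  by rewrite (_ : (bb+a+c)*(-bb+a+c)*(bb-a+c)*(bb+a-c) = (a+bb+c)*(-a+bb+c)*(a-bb+c)*(a+bb-c)) //; ring.
have hz : 0 < -c+a+bb.
  apply: (tri_pos hc0 ha0 hb0).
  by rewrite (_ : (c+a+bb)*(-c+a+bb)*(c-a+bb)*(c+a-bb) = (a+bb+c)*(-a+bb+c)*(a-bb+c)*(a+bb-c)) //; ring.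
have [x ex] : exists x, x = (-a+bb+c)/2 by eexists.
have [y ey] : exists y, y = (-bb+a+c)/2 by eexists.
have [z ez] : exists z, z = (-c+a+bb)/2 by eexists.
have hx' : 0 < x by rewrite ex; lra.
have hy' : 0 < y by rewrite ey; lra.
have hz' : 0 < z by rewrite ez; lra.
have ea : a = y + z by rewrite ey ez; field.
have eb : bb = x + z by rewrite ex ez; field.
have ec : c = x + y by rewrite ex ey; field.
have a0 : a != 0 by rewrite ea gt_eqF //; lra.
have s0 : x+y+z != 0 by rewrite gt_eqF //; lra.
have hcr2 : cr^+2 = 4*(x+y+z)*x*y*z.
  apply: (@mulfI _ 4); first by rewrite pnatr_eq0.
  by rewrite heron ex ey ez; field.
have [b0 eb0] : exists b0, b0 = (0 < cr) by eexists.
have hss : sgb R b0 * sgb R b0 = 1 by rewrite /sgb; case: b0 {eb0}; ring.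
have hD : 0 < sgb R b0 * cr.
  rewrite eb0 /sgb; case: ifP => h; first by rewrite mul1r.
  move/negbT: h; rewrite -leNgt => h.
  by rewrite mulN1r oppr_gt0 lt_neqAle hcr h.
have [r er] : exists r, r = sgb R b0 * cr / (2*(x+y+z)) by eexists.
have hr : 0 < r by rewrite er; apply: divr_gt0 => //; lra.
have r0 : r != 0 by rewrite gt_eqF.
have hr2 : r^+2 = x*y*z/(x+y+z).
  rewrite er; transitivity ((sgb R b0 * sgb R b0) * cr^+2 / (4*(x+y+z)^+2)); first by field; nz.
  by rewrite hss hcr2; field; nz.
have [kc kb ka kcr huv] := key_alg hx' hy' hz' hr hr2.
have n2 : y/r*(z/r) - 1 != 0 by rewrite gt_eqF // subr_gt0.
have n3 : y*z + -1*(r*r) != 0.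
  have -> : y*z + -1*(r*r) = r^+2 * (y/r*(z/r) - 1) by field; nz.
  by rewrite gt_eqF // mulr_gt0 ?exprn_gt0 // subr_gt0.
have [p ep] : exists p, p = (C.1-B.1)*r/a by eexists.
have [q eq] : exists q, q = (C.2-B.2)*r/a by eexists.
have hk : p^+2+q^+2 = r^+2.
  rewrite ep eq; transitivity (r^+2 * ((C.1-B.1)^+2+(C.2-B.2)^+2)/a^+2); first by field; nz.
  by rewrite -ha2; field; nz.
exists (B.1 + p*(y/r) - sgb R b0 * q, B.2 + q*(y/r) + sgb R b0 * p), p, q, b0, (y/r), (z/r).
set T := (B.1 + p*(y/r) - sgb R b0 * q, B.2 + q*(y/r) + sgb R b0 * p).
have hk0 : p^+2+q^+2 != 0 by rewrite hk; nz.
have eB : sim T p q b0 (Bc (y/r) (z/r)) = B by apply: pt_eq; rewrite /sim /T /Bc /=; ring.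
have eC : sim T p q b0 (Cc (y/r) (z/r)) = C.
  apply: pt_eq; rewrite /sim /T /Cc /=.
  - transitivity (B.1 + (C.1-B.1)*(r*(y/r+z/r))/a); first by rewrite ep; ring.
    by rewrite ka -ea; field.
  - transitivity (B.2 + (C.2-B.2)*(r*(y/r+z/r))/a); first by rewrite eq; ring.
    by rewrite ka -ea; field.
split => //; first by apply: divr_gt0.
  by apply: divr_gt0.
split => //.
apply: (@same_point _ _ _ B C).
- have h := dot_sim T p q b0 (Ac (y/r) (z/r)) (Bc (y/r) (z/r)) (Ac (y/r) (z/r)) (Bc (y/r) (z/r)).
  rewrite eB in h; rewrite h hk.
  transitivity (c^+2); last by rewrite hc2 /dot /psub /=; ring.
  transitivity ((r * ((z/r)*((y/r)^+2+1)/((y/r)*(z/r)-1)))^+2).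
    by rewrite /dot /psub /Ac /Bc /=; field; nz.
  by rewrite kc ec.
- have h := dot_sim T p q b0 (Ac (y/r) (z/r)) (Cc (y/r) (z/r)) (Ac (y/r) (z/r)) (Cc (y/r) (z/r)).
  rewrite eC in h; rewrite h hk.
  transitivity (bb^+2); last by rewrite hb2 /dot /psub /=; ring.
  transitivity ((r * ((y/r)*((z/r)^+2+1)/((y/r)*(z/r)-1)))^+2).
    by rewrite /dot /psub /Ac /Cc /=; field; nz.
  by rewrite kb eb.
- have h := coll_sim_e2 T p q b0 (Bc (y/r) (z/r)) (Cc (y/r) (z/r)) (Ac (y/r) (z/r)).
  rewrite eB eC in h; rewrite h hk -ecr.
  transitivity (sgb R b0 * (r^+2*(((y/r)+(z/r))*(2*((y/r)*(z/r))/((y/r)*(z/r)-1))))).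
    by rewrite /Ac /Bc /Cc /=; field; nz.
  rewrite kcr er; transitivity ((sgb R b0 * sgb R b0) * cr); first by field; nz.
  by rewrite hss mul1r.
- by rewrite -ha2; nz.
Qed.

Unset Implicit Arguments.

Theorem proposition4p2 (R : rcfType) (A B C Be A0 B0 C0 O0 A' B' C' H' : point R) :
  ~ collinear A B C ->
  is_bevan_point Be A B C ->
  is_foot A0 (excenterA A B C) B C ->
  is_foot B0 (excenterB A B C) C A ->
  is_foot C0 (excenterC A B C) A B ->
  is_circumcenter O0 A0 B0 C0 ->
  is_foot A' Be A (incenter A B C) ->
  is_foot B' Be B (incenter A B C) ->
  is_foot C' Be C (incenter A B C) ->
  is_orthocenter H' A' B' C' ->
  collinear Be H' O0.
Proof.
move=> hnc.
have [T [p [q [b [u [v [hk hu hv huv [eA eB eC]]]]]]]] := realize hnc.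
subst A B C.
rewrite -[Be](sim_inv T b Be hk) -[A0](sim_inv T b A0 hk) -[B0](sim_inv T b B0 hk)
  -[C0](sim_inv T b C0 hk) -[O0](sim_inv T b O0 hk) -[A'](sim_inv T b A' hk)
  -[B'](sim_inv T b B' hk) -[C'](sim_inv T b C' hk) -[H'](sim_inv T b H' hk).
exact: (@transfer R T p q b u v (siminv T p q b Be) (siminv T p q b A0) (siminv T p q b B0)
  (siminv T p q b C0) (siminv T p q b O0) (siminv T p q b A') (siminv T p q b B')
  (siminv T p q b C') (siminv T p q b H') hk hu hv huv).
Qed.
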